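(* Let $n,k\ge 0$ be integers, let $\mathbb{P}^{(n)}=\{I,X,Y,Z\}^{\otimes n}$ be the $n$-qubit Pauli operators (modulo phase), and let $\mathcal{T}_P^{(k)}$ be the multi-time Pauli twirl acting on operators $\Upsilon$ on $\mathcal{H}_{\Upsilon_{0:k}}=\bigotimes_{j=0}^k(\mathcal{H}_{\mathfrak{i}_j}\otimes\mathcal{H}_{\mathfrak{o}_j})$ (each factor an $n$-qubit space) by \[ \mathcal{T}_P^{(k)}(\Upsilon)=\frac{1}{|\mathbb{P}^{(n)}|^{k+1}}\sum_{P_0,\dots,P_k\in\mathbb{P}^{(n)}}\Big(\bigotimes_{j=0}^k P_j\otimes P_j\Big)\,\Upsilon\,\Big(\bigotimes_{j=0}^k P_j\otimes P_j\Big), \] where in the $j$-th factor the first $P_j$ acts on $\mathcal{H}_{\mathfrak{i}_j}$ and the second on $\mathcal{H}_{\mathfrak{o}_j}$. Then: (1) (Validity) for every Choi operator $\Upsilon_{0:k}$ of a valid (CPTP) $k$-slot process tensor, $\mathcal{T}_P^{(k)}(\Upsilon_{0:k})$ is again the Choi operator of a valid (CPTP) $k$-slot process tensor; (2) (Projector) $\mathcal{T}_P^{(k)}\circ\mathcal{T}_P^{(k)}=\mathcal{T}_P^{(k)}$; (3) (Causality) the causal (affine) constraints are preserved: if $\Upsilon_{0:k}$ satisfies the causal constraints below, so does $\mathcal{T}_P^{(k)}(\Upsilon_{0:k})$.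
   Context: A $k$-slot process tensor is described by its Choi operator $\Upsilon_{0:k}$, a linear operator on $\mathcal{H}_{\Upsilon_{0:k}}=\bigotimes_{j=0}^k(\mathcal{H}_{\mathfrak{i}_j}\otimes\mathcal{H}_{\mathfrak{o}_j})$, where $\mathcal{H}_{\mathfrak{i}_j},\mathcal{H}_{\mathfrak{o}_j}$ are the system input/output spaces at time step $j$. It is valid (CPTP) iff $\Upsilon_{0:k}\ge 0$ and it satisfies the causal constraints: there are operators $\Upsilon_{0:j}$ on $\bigotimes_{l=0}^{j}(\mathcal{H}_{\mathfrak{i}_l}\otimes\mathcal{H}_{\mathfrak{o}_l})$, $j=0,\dots,k$ (with $\Upsilon_{0:k}$ the given operator), such that $\mathrm{Tr}_{\mathfrak{o}_j}[\Upsilon_{0:j}]=\Upsilon_{0:j-1}\otimes\mathbb{I}_{\mathfrak{i}_j}$ for $j=1,\dots,k$ and $\mathrm{Tr}_{\mathfrak{o}_0}[\Upsilon_{0:0}]=\mathbb{I}_{\mathfrak{i}_0}$. Choi operators use the unnormalised maximally entangled vector $\sum_i|i\rangle|i\rangle$. *)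

(* Defs.v *)
From HB Require Import structures.
From mathcomp Require Import all_boot all_order all_algebra all_field.
Set Implicit Arguments. Unset Strict Implicit. Unset Printing Implicit Defensive.
Import Order.TTheory GRing.Theory Num.Theory.
Local Open Scope ring_scope.

(* Computational basis of n qubits: bit strings of length n. *)
Definition Qb (n : nat) := {ffun 'I_n -> bool}.

(* Basis of H_{Upsilon_{0:j}} = (x)_{l=0}^{j} (H_{i_l} (x) H_{o_l}):
   for each time step l, a pair (input index, output index). *)
Definition Idx (n j : nat) := {ffun 'I_j.+1 -> (Qb n * Qb n)%type}.

(* Linear operators on the space with orthonormal basis indexed by T,
   given by their matrix entries <x|A|y>. *)
Definition Op (T : finType) := T -> T -> algC.

Definition opmul (T : finType) (A B : Op T) : Op T :=
  fun x y => \sum_(z : T) A x z * B z y.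

Definition idop (T : finType) : Op T := fun x y => (x == y)%:R.

Definition psd (T : finType) (A : Op T) : Prop :=
  (forall x y, A y x = (A x y)^*) /\
  (forall v : T -> algC, 0 <= \sum_(x : T) \sum_(y : T) (v x)^* * A x y * v y).

(* Single-qubit Paulis: 0 = I, 1 = X, 2 = Y, 3 = Z; entries <b|P|c>. *)
Definition pauli1 (a : 'I_4) (b c : bool) : algC :=
  match val a with
  | 0 => (b == c)%:R
  | 1 => (b != c)%:R
  | 2 => if b == c then 0 else (if b then 'i else - 'i)
  | _ => if b == c then (if b then -1 else 1) else 0
  end.

Definition PauliIdx (n : nat) := {ffun 'I_n -> 'I_4}.
Definition pauli (n : nat) (p : PauliIdx n) : Op (Qb n) :=
  fun x y => \prod_(q < n) pauli1 (p q) (x q) (y q).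

Definition pauli_layer (n k : nat) (ps : {ffun 'I_k.+1 -> PauliIdx n}) :
  Op (Idx n k) :=
  fun x y => \prod_(j < k.+1)
     (pauli (ps j) (x j).1 (y j).1 * pauli (ps j) (x j).2 (y j).2).

Definition twirl (n k : nat) (U : Op (Idx n k)) : Op (Idx n k) :=
  fun x y => (#|PauliIdx n| ^ k.+1)%:R^-1 *
    \sum_(ps : {ffun 'I_k.+1 -> PauliIdx n})
       opmul (opmul (pauli_layer ps) U) (pauli_layer ps) x y.

Definition ext (n j : nat) (x : Idx n j) (p : Qb n * Qb n) : Idx n j.+1 :=
  [ffun l : 'I_j.+2 => if unlift ord_max l is Some l' then x l' else p].

Definition single (n : nat) (p : Qb n * Qb n) : Idx n 0 := [ffun _ => p].

(* Tr_{o_{j+1}} : operators on H_{0:j+1} -> operators on H_{0:j} (x) H_{i_{j+1}}. *)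
Definition ptrace_out (n j : nat) (A : Op (Idx n j.+1)) :
  Op (Idx n j * Qb n)%type :=
  fun u v => \sum_(c : Qb n) A (ext u.1 (u.2, c)) (ext v.1 (v.2, c)).

Definition ptrace_out0 (n : nat) (A : Op (Idx n 0)) : Op (Qb n) :=
  fun a b => \sum_(c : Qb n) A (single (a, c)) (single (b, c)).

Definition tens_id (n j : nat) (B : Op (Idx n j)) :
  Op (Idx n j * Qb n)%type :=
  fun u v => B u.1 v.1 * (u.2 == v.2)%:R.

Definition causal (n k : nat) (U : Op (Idx n k)) : Prop :=
  exists Ups : forall j : nat, Op (Idx n j),
    Ups k = U /\
    ptrace_out0 (Ups 0%N) = @idop (Qb n) /\
    (forall j : nat, (j < k)%N -> ptrace_out (Ups j.+1) = tens_id (Ups j)).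

Definition valid_pt (n k : nat) (U : Op (Idx n k)) : Prop :=
  psd U /\ causal U.

(* Main.v *)
Require Import Defs.
From HB Require Import structures.
From mathcomp Require Import all_boot all_order all_algebra all_field.
From mathcomp Require Import ring.
From Stdlib Require Import FunctionalExtensionality.
Set Implicit Arguments. Unset Strict Implicit. Unset Printing Implicit Defensive.
Import Order.TTheory GRing.Theory Num.Theory.
Local Open Scope ring_scope.

Definition fl (a : 'I_4) : bool := (val a == 1%N) || (val a == 2%N).
Definition ph (a : 'I_4) (b : bool) : algC :=
  match val a with
  | 0 => 1 | 1 => 1
  | 2 => if b then 'i else - 'i
  | _ => if b then -1 else 1 end.

Lemma pauli1E a b c : pauli1 a b c = ph a b * (c == b (+) fl a)%:R.
Proof.
case: a => [[|[|[|[|m]]]] Hm]; rewrite /pauli1 /ph /fl /=;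
 case: b; case: c => /=; rewrite ?mulr1 ?mulr0 //.
Qed.

Lemma prod_boolR (I : finType) (b : I -> bool) :
  \prod_(i : I) ((b i)%:R : algC) = ([forall i, b i])%:R.
Proof.
case: (boolP [forall i, b i]) => [/forallP H|/forallPn [i Hi]].
  by rewrite big1 // => i _; rewrite H.
by rewrite (bigD1 i) //= (negbTE Hi) mul0r.
Qed.

Lemma boolR_mul (a b : bool) : (a%:R * b%:R : algC) = (a && b)%:R.
Proof. by case: a; case: b; rewrite ?mulr1 ?mulr0. Qed.

Lemma sum_delta (T : finType) (G : T -> algC) a :
  \sum_(z : T) G z * (z == a)%:R = G a.
Proof.
rewrite (bigD1 a) //= eqxx mulr1 big1 ?addr0 // => z /negbTE ->; by rewrite mulr0.
Qed.

Definition xorq n (x f : Qb n) : Qb n := [ffun q => x q (+) f q].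

Lemma xorqK n (f : Qb n) : involutive (fun x : Qb n => xorq x f).
Proof. by move=> x; apply/ffunP => q; rewrite !ffunE -addbA addbb addbF. Qed.

Lemma pauliE n (p : PauliIdx n) x y :
  pauli p x y = (\prod_q ph (p q) (x q)) * (y == xorq x [ffun q => fl (p q)])%:R.
Proof.
rewrite /pauli (eq_bigr (fun q => ph (p q) (x q) * (y q == x q (+) fl (p q))%:R));
  last by move=> q _; apply: pauli1E.
rewrite big_split /= prod_boolR.
congr (_ * _%:R); congr nat_of_bool; apply/idP/idP => [/forallP H|/eqP ->].
  by apply/eqP/ffunP => q; rewrite !ffunE; apply/eqP.
by apply/forallP => q; rewrite !ffunE.
Qed.

Definition FP n k := {ffun 'I_k.+1 -> Qb n}.
Definition shift n k (x : Idx n k) (f : FP n k) : Idx n k :=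
  [ffun j => (xorq (x j).1 (f j), xorq (x j).2 (f j))].
Definition FL n k (ps : {ffun 'I_k.+1 -> PauliIdx n}) : FP n k :=
  [ffun j => [ffun q => fl (ps j q)]].
Definition Phi n k (ps : {ffun 'I_k.+1 -> PauliIdx n}) (x : Idx n k) : algC :=
  \prod_j ((\prod_q ph (ps j q) ((x j).1 q)) * (\prod_q ph (ps j q) ((x j).2 q))).

Lemma layerE n k (ps : {ffun 'I_k.+1 -> PauliIdx n}) x y :
  pauli_layer ps x y = Phi ps x * (y == shift x (FL ps))%:R.
Proof.
rewrite /pauli_layer (eq_bigr (fun j =>
  ((\prod_q ph (ps j q) ((x j).1 q)) * (\prod_q ph (ps j q) ((x j).2 q))) *
  (((y j).1 == xorq (x j).1 (FL ps j)) && ((y j).2 == xorq (x j).2 (FL ps j)))%:R)).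
  rewrite big_split /= prod_boolR; congr (_ * _%:R); congr nat_of_bool.
  apply/idP/idP => [/forallP H|/eqP ->].
    apply/eqP/ffunP => j; rewrite !ffunE; have /andP[/eqP E1 /eqP E2] := H j.
    by move: E1 E2; rewrite /FL ffunE; case: (y j) => a b /= -> ->.
  by apply/forallP => j; rewrite !ffunE /= !eqxx.
by move=> j _; rewrite !pauliE mulrACA boolR_mul /FL ffunE.
Qed.

Lemma shiftK n k (f : FP n k) : involutive (fun x => shift x f).
Proof.
move=> x; apply/ffunP => j; rewrite !ffunE /= !xorqK.
by case: (x j).
Qed.

Lemma shift_eq n k (f : FP n k) x y : (y == shift x f) = (x == shift y f).
Proof.
apply/eqP/eqP => ->; by rewrite shiftK.
Qed.

Lemma conjE n k (ps : {ffun 'I_k.+1 -> PauliIdx n}) (U : Op (Idx n k)) x y :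
  opmul (opmul (pauli_layer ps) U) (pauli_layer ps) x y =
  Phi ps x * Phi ps (shift y (FL ps)) * U (shift x (FL ps)) (shift y (FL ps)).
Proof.
rewrite /opmul.
under eq_bigr => w _.
  under eq_bigr => z _ do rewrite layerE mulrAC.
  rewrite sum_delta layerE shift_eq.
  over.
rewrite /= (eq_bigr (fun w => (Phi ps x * (U (shift x (FL ps)) w * Phi ps w)) * (w == shift y (FL ps))%:R)).
  by rewrite sum_delta; ring.
by move=> w _; rewrite !mulrA.
Qed.
Lemma pos_sum (x1 x2 y1 y2 e : bool) :
  \sum_(a < 4) ph a x1 * ph a x2 * (ph a (y1 (+) e) * ph a (y2 (+) e)) * (fl a == e)%:R
  = 2 * (x1 (+) x2 == y1 (+) y2)%:R.
Proof.
have ii : 'i * 'i = -1 :> algC by rewrite -expr2 sqrCi.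
rewrite !big_ord_recl big_ord0 /ph /fl /=.
case: x1; case: x2; case: y1; case: y2; case: e => /=;
 rewrite ?mulr1 ?mulr0 ?mul1r ?mul0r ?addr0 ?add0r; try ring.
all: rewrite ?mulNr ?mulrN ?opprK ?ii; ring.
Qed.

Definition par n k (x : Idx n k) : FP n k := [ffun j => xorq (x j).1 (x j).2].

Lemma key n k (x y : Idx n k) (f : FP n k) :
  \sum_(ps | FL ps == f) Phi ps x * Phi ps (shift y f) =
  ((2 ^ n) ^ k.+1)%:R * (par x == par y)%:R.
Proof.
pose T j q (a : 'I_4) := ph a ((x j).1 q) * ph a ((x j).2 q) *
   (ph a ((shift y f j).1 q) * ph a ((shift y f j).2 q)) * (fl a == f j q)%:R.
transitivity (\sum_(ps : {ffun 'I_k.+1 -> PauliIdx n}) \prod_j \prod_q T j q (ps j q)).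
  rewrite big_mkcond /=; apply: eq_bigr => ps _.
  rewrite /T; under eq_bigr do rewrite big_split /=.
  rewrite big_split /=.
  under [X in _ = _ * X]eq_bigr do rewrite prod_boolR.
  rewrite prod_boolR.
  have -> : [forall i, [forall i0, fl (ps i i0) == f i i0]] = (FL ps == f).
    apply/idP/idP => [/forallP H|/eqP <-].
      apply/eqP/ffunP => j; apply/ffunP => q; rewrite !ffunE.
      by have /forallP/(_ q)/eqP := H j.
    by apply/forallP => j; apply/forallP => q; rewrite !ffunE.
  case: (FL ps == f); rewrite ?mulr1 ?mulr0 //.
  by rewrite /Phi -big_split; apply: eq_bigr => j _; rewrite -!big_split.
transitivity (\prod_j \prod_q \sum_a T j q a).
  symmetry; under eq_bigr do rewrite bigA_distr_bigA.
  by rewrite bigA_distr_bigA.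
under eq_bigr => j _.
  under eq_bigr => q _.
    rewrite /T /shift ffunE /= !ffunE pos_sum.
    over.
  rewrite big_split /= prodr_const card_ord prod_boolR.
  over.
rewrite big_split /= prodr_const card_ord prod_boolR -!natrX.
congr (_ * _%:R); congr nat_of_bool.
apply/idP/idP => [/forallP H|/eqP E].
  apply/eqP/ffunP => j; apply/ffunP => q; rewrite !ffunE.
  by have /forallP/(_ q)/eqP := H j.
apply/forallP => j; apply/forallP => q.
by have /ffunP/(_ j)/ffunP/(_ q) := E; rewrite !ffunE => ->.
Qed.

Definition tw n k (U : Op (Idx n k)) : Op (Idx n k) := fun x y =>
  (par x == par y)%:R * (#|FP n k|%:R)^-1 * \sum_(f : FP n k) U (shift x f) (shift y f).

Lemma cardFP n k : #|FP n k| = ((2 ^ n) ^ k.+1)%N.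
Proof. by rewrite /FP card_ffun /Qb card_ffun card_bool !card_ord. Qed.

Lemma cardFP_neq0 n k : (#|FP n k|%:R : algC) != 0.
Proof. by rewrite cardFP pnatr_eq0 -lt0n !expn_gt0. Qed.

Lemma twirlE n k (U : Op (Idx n k)) x y : twirl U x y = tw U x y.
Proof.
rewrite /twirl; under eq_bigr do rewrite conjE.
rewrite (partition_big (@FL n k) predT) //=.
under eq_bigr => f _.
  rewrite (eq_bigr (fun ps => Phi ps x * Phi ps (shift y f) * U (shift x f) (shift y f)));
    last by move=> ps /eqP ->.
  rewrite -big_distrl /= key -mulrA.
  over.
rewrite -mulr_sumr -mulr_sumr /tw.
have -> : (#|PauliIdx n| ^ k.+1)%N = (#|FP n k| * #|FP n k|)%N.
  by rewrite cardFP /PauliIdx card_ffun !card_ord -expnMn -expnMn.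
rewrite -cardFP natrM.
have := cardFP_neq0 n k; set M := (#|FP n k|%:R : algC) => HM.
field.
by rewrite HM.
Qed.

Lemma par_shift n k (x : Idx n k) f : par (shift x f) = par x.
Proof.
apply/ffunP => j; rewrite !ffunE /=; apply/ffunP => q; rewrite !ffunE.
by case: ((x j).1 q); case: ((x j).2 q); case: (f j q).
Qed.

Definition fxor n k (f g : FP n k) : FP n k := [ffun j => xorq (f j) (g j)].

Lemma shift_shift n k (x : Idx n k) f g : shift (shift x f) g = shift x (fxor f g).
Proof.
apply/ffunP => j; rewrite !ffunE /=; congr pair; apply/ffunP => q; rewrite !ffunE;
  by rewrite addbA.
Qed.

Lemma fxorK n k (f : FP n k) : involutive (fxor f).
Proof.
move=> g; apply/ffunP => j; apply/ffunP => q; rewrite !ffunE.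
by rewrite addbA addbb.
Qed.

Lemma sum_fxor n k (f : FP n k) (G : FP n k -> algC) :
  \sum_g G (fxor f g) = \sum_g G g.
Proof. by rewrite [RHS](reindex_inj (inv_inj (fxorK f))). Qed.

Lemma tw_idem n k (U : Op (Idx n k)) x y : tw (tw U) x y = tw U x y.
Proof.
rewrite /tw.
under eq_bigr => f _.
  rewrite !par_shift.
  under eq_bigr do rewrite !shift_shift.
  rewrite (sum_fxor f (fun g => U (shift x g) (shift y g))).
  over.
case: (par x == par y); last by rewrite (_ : false%:R = 0 :> algC) // !mul0r.
rewrite sumr_const -[_ *+ #|_|]mulr_natr.
have := cardFP_neq0 n k; rewrite !cardFP; set M := (((2 ^ n) ^ k.+1)%:R : algC) => HM.
rewrite (_ : true%:R = 1 :> algC) // !mul1r.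
by field.
Qed.

Definition gext (T : Type) j (x : {ffun 'I_j.+1 -> T}) (t : T) : {ffun 'I_j.+2 -> T} :=
  [ffun l => if unlift ord_max l is Some l' then x l' else t].
Definition restr (T : Type) j (x : {ffun 'I_j.+2 -> T}) : {ffun 'I_j.+1 -> T} :=
  [ffun l => x (lift ord_max l)].

Lemma gext_max T j (x : {ffun 'I_j.+1 -> T}) t : gext x t ord_max = t.
Proof. by rewrite ffunE unlift_none. Qed.
Lemma gext_lift T j (x : {ffun 'I_j.+1 -> T}) t l : gext x t (lift ord_max l) = x l.
Proof. by rewrite ffunE liftK. Qed.
Lemma restr_gext T j (x : {ffun 'I_j.+1 -> T}) t : restr (gext x t) = x.
Proof. by apply/ffunP => l; rewrite ffunE gext_lift. Qed.
Lemma gext_restr T j (x : {ffun 'I_j.+2 -> T}) : gext (restr x) (x ord_max) = x.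
Proof.
apply/ffunP => l; case: (unliftP ord_max l) => [l'|] ->.
  by rewrite gext_lift ffunE.
by rewrite gext_max.
Qed.
Lemma gext_eq (T : eqType) j (x y : {ffun 'I_j.+1 -> T}) s t :
  (gext x s == gext y t) = (x == y) && (s == t).
Proof.
apply/eqP/andP => [E|[/eqP -> /eqP ->]] //.
split; apply/eqP.
  by rewrite -(restr_gext x s) E restr_gext.
by rewrite -(gext_max x s) E gext_max.
Qed.

Lemma sum_split n j (G : FP n j.+1 -> algC) :
  \sum_(f : FP n j.+1) G f = \sum_(f : FP n j) \sum_(e : Qb n) G (gext f e).
Proof.
rewrite pair_big /=.
rewrite (reindex (fun p : FP n j * Qb n => gext p.1 p.2)) //=.
exists (fun f : FP n j.+1 => (restr f, f ord_max)) => [[a b]|f] _ /=.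
  by rewrite restr_gext gext_max.
exact: gext_restr.
Qed.

Lemma extE n j (x : Idx n j) p : ext x p = gext x p.
Proof. by []. Qed.

Lemma par_gext n j (x : Idx n j) p : par (gext x p) = gext (par x) (xorq p.1 p.2).
Proof.
apply/ffunP => l; case: (unliftP ord_max l) => [l'|] ->.
  by rewrite ffunE !gext_lift ffunE.
by rewrite ffunE !gext_max.
Qed.

Lemma shift_gext n j (x : Idx n j) p (f : FP n j.+1) :
  shift (gext x p) f = gext (shift x (restr f)) (xorq p.1 (f ord_max), xorq p.2 (f ord_max)).
Proof.
apply/ffunP => l; case: (unliftP ord_max l) => [l'|] ->.
  by rewrite ffunE !gext_lift !ffunE.
by rewrite ffunE !gext_max.
Qed.

Lemma xorq_eq n (a b c : Qb n) : (xorq a c == xorq b c) = (a == b).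
Proof.
apply/eqP/eqP => [E|->] //.
by rewrite -(xorqK c a) E xorqK.
Qed.

Lemma ptrace_tw n j (A : Op (Idx n j.+1)) (B : Op (Idx n j)) :
  ptrace_out A = tens_id B -> ptrace_out (tw A) = tens_id (tw B).
Proof.
move=> H; apply: functional_extensionality => -[u1 u2].
apply: functional_extensionality => -[v1 v2].
rewrite /ptrace_out /tens_id /tw /=.
under eq_bigr => c _ do rewrite !extE !par_gext gext_eq /= xorq_eq.
case: (eqVneq u2 v2) => [<-|neq]; last first.
  rewrite (_ : false%:R = 0 :> algC) // mulr0; apply: big1 => c _.
  by rewrite andbF (_ : false%:R = 0 :> algC) // !mul0r.
under eq_bigr => c _ do rewrite andbT.
rewrite (_ : true%:R = 1 :> algC) // mulr1 -mulr_sumr exchange_big sum_split /=.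
under eq_bigr => f _.
  under eq_bigr => e _.
    under eq_bigr => c _ do rewrite !shift_gext restr_gext !gext_max /=.
    rewrite (reindex_inj (inv_inj (xorqK e))) /=.
    under eq_bigr => c _ do rewrite xorqK -!extE.
    have := f_equal (fun F => F (shift u1 f, xorq u2 e) (shift v1 f, xorq u2 e)) H.
    rewrite /ptrace_out /tens_id /= eqxx mulr1 => ->.
    over.
  rewrite sumr_const -[_ *+ #|_|]mulr_natr.
  over.
rewrite -mulr_suml.
have HM := cardFP_neq0 n j; rewrite cardFP in HM.
have cQ : #|Qb n| = (2 ^ n)%N by rewrite /Qb card_ffun card_bool card_ord.
rewrite cQ !cardFP expnS natrM.
case: (par u1 == par v1); last by rewrite (_ : false%:R = 0 :> algC) // !mul0r.
rewrite (_ : true%:R = 1 :> algC) // !mul1r.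
by field; rewrite HM /= pnatr_eq0 -lt0n expn_gt0.
Qed.

Lemma par_single n (p : Qb n * Qb n) : par (single p) = [ffun _ => xorq p.1 p.2].
Proof. by apply/ffunP => i; rewrite !ffunE. Qed.

Lemma shift_single n (p : Qb n * Qb n) (f : FP n 0) :
  shift (single p) f = single (xorq p.1 (f ord0), xorq p.2 (f ord0)).
Proof. by apply/ffunP => i; rewrite !ffunE (ord1 i). Qed.

Lemma const_eq n (s t : Qb n) :
  ([ffun _ => s] == [ffun _ => t] :> FP n 0) = (s == t).
Proof.
apply/eqP/eqP => [E|->] //.
by have := f_equal (fun F : FP n 0 => F ord0) E; rewrite !ffunE.
Qed.

Lemma sum0 n (G : FP n 0 -> algC) :
  \sum_(f : FP n 0) G f = \sum_(e : Qb n) G [ffun _ => e].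
Proof.
rewrite (reindex (fun e : Qb n => ([ffun _ => e] : FP n 0))) //=.
exists (fun f : FP n 0 => f ord0) => [e|f] _; first by rewrite ffunE.
by apply/ffunP => i; rewrite ffunE (ord1 i).
Qed.

Lemma ptrace0_tw n (A : Op (Idx n 0)) :
  ptrace_out0 A = @idop (Qb n) -> ptrace_out0 (tw A) = @idop (Qb n).
Proof.
move=> H; apply: functional_extensionality => a.
apply: functional_extensionality => b.
rewrite /ptrace_out0 /tw /idop /=.
under eq_bigr => c _ do rewrite !par_single const_eq xorq_eq.
case: (eqVneq a b) => [<-|neq]; last first.
  rewrite big1 // => c _.
  by rewrite (_ : false%:R = 0 :> algC) // !mul0r.
under eq_bigr => c _ do rewrite (_ : true%:R = 1 :> algC) //.
rewrite -mulr_sumr exchange_big sum0 /=.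
under eq_bigr => e _.
  under eq_bigr => c _ do rewrite !shift_single ffunE /=.
  rewrite (reindex_inj (inv_inj (xorqK e))) /=.
  under eq_bigr => c _ do rewrite xorqK.
  have := f_equal (fun F => F (xorq a e) (xorq a e)) H.
  rewrite /ptrace_out0 /idop /= eqxx => ->.
  over.
rewrite sumr_const -[_ *+ #|_|]mulr_natr mul1r.
have HM := cardFP_neq0 n 0; rewrite cardFP in HM.
have cQ : #|Qb n| = (2 ^ n)%N by rewrite /Qb card_ffun card_bool card_ord.
rewrite cQ !cardFP expn1 in HM *.
by rewrite (_ : true%:R = 1 :> algC) // mul1r mulVf.
Qed.

Lemma tw_herm n k (U : Op (Idx n k)) :
  (forall x y, U y x = (U x y)^*) -> forall x y, tw U y x = (tw U x y)^*.
Proof.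
move=> HU x y; rewrite /tw !rmorphM /= fmorphV rmorph_sum /= !rmorph_nat eq_sym.
by congr (_ * _); apply: eq_bigr => f _; rewrite HU.
Qed.

Lemma tw_pos n k (U : Op (Idx n k)) :
  psd U -> forall v : Idx n k -> algC,
  0 <= \sum_x \sum_y (v x)^* * tw U x y * v y.
Proof.
move=> [HU1 HU2] v.
pose M := (#|FP n k|%:R : algC).
pose w (s : FP n k) x := (par x == s)%:R * v x.
have E : \sum_x \sum_y (v x)^* * tw U x y * v y =
  \sum_x \sum_y \sum_(s : FP n k) \sum_(f : FP n k)
     M^-1 * ((w s x)^* * U (shift x f) (shift y f) * w s y).
  apply: eq_bigr => x _; apply: eq_bigr => y _.
  under eq_bigr => s _.
    under eq_bigr => f _.
      rewrite /w rmorphM /= conjC_nat.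
      rewrite (_ : _ * _ = ((par y == s)%:R * (par x == s)%:R) *
                  (M^-1 * ((v x)^* * U (shift x f) (shift y f) * v y))); last by ring.
      over.
    rewrite -mulr_sumr mulrAC (eq_sym (par x)).
    over.
  rewrite sum_delta eq_sym /tw -/M !mulr_sumr mulr_suml.
  by apply: eq_bigr => f _; ring.
rewrite E.
under eq_bigr do under eq_bigr do rewrite exchange_big.
under eq_bigr do rewrite exchange_big.
rewrite exchange_big.
under eq_bigr do under eq_bigr do rewrite exchange_big.
under eq_bigr do rewrite exchange_big.
apply: sumr_ge0 => f _; apply: sumr_ge0 => s _ /=.
under eq_bigr do rewrite -mulr_sumr. rewrite -mulr_sumr; apply: mulr_ge0; first by rewrite invr_ge0 ler0n.
have := HU2 (fun x => w s (shift x f)).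
rewrite (reindex_inj (inv_inj (shiftK f))) /=.
under eq_bigr do rewrite (reindex_inj (inv_inj (shiftK f))) /= !shiftK.
by under eq_bigr do under eq_bigr do rewrite shiftK.
Qed.

Lemma twE n k (U : Op (Idx n k)) : twirl U = tw U.
Proof.
apply: functional_extensionality => x; apply: functional_extensionality => y.
exact: twirlE.
Qed.

Lemma causal_tw n k (U : Op (Idx n k)) : causal U -> causal (twirl U).
Proof.
move=> [Ups [H1 [H2 H3]]].
exists (fun j => twirl (Ups j)); split; first by rewrite H1.
split; first by rewrite twE; exact: ptrace0_tw.
by move=> j hj; rewrite !twE; exact: ptrace_tw (H3 j hj).
Qed.

Theorem proposition1 (n k : nat) :
  (forall U : Op (Idx n k), valid_pt U -> valid_pt (twirl U)) /\
  (forall U : Op (Idx n k), twirl (twirl U) = twirl U) /\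
  (forall U : Op (Idx n k), causal U -> causal (twirl U)).
Proof.
split; [|split; [|exact: causal_tw]].
  move=> U [HU HC]; split; last exact: causal_tw.
  rewrite twE; split; first by apply: tw_herm; case: HU.
  exact: tw_pos.
move=> U; rewrite !twE.
apply: functional_extensionality => x; apply: functional_extensionality => y.
exact: tw_idem.
Qed.
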